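(* Let $J$ be a $3\times 3$ Jacobi matrix that realizes perfect state transfer, and let $T_0>0$ be the earliest time at which perfect state transfer occurs. Then $J$ does not have Early State Exclusion; that is, there is no $t$ with $0<t<T_0$ such that $(e^{-iJt}\mathbf{e}_0,\mathbf{e}_0)_{\mathbb{C}^{3}}=0$.
   Context: A Jacobi matrix of order $N+1$ is a real symmetric tridiagonal $(N+1)\times(N+1)$ matrix $J$ with diagonal entries $a_0,\dots,a_N\in\mathbb{R}$ and off-diagonal entries $b_0,\dots,b_{N-1}>0$. Let $\mathbf{e}_0,\dots,\mathbf{e}_N$ be the standard basis of $\mathbb{C}^{N+1}$. $J$ realizes perfect state transfer (PST) at time $T>0$ if $e^{-iTJ}\mathbf{e}_0=e^{i\phi}\mathbf{e}_N$ for some $\phi\in\mathbb{R}$. If $T_0$ is the earliest (smallest positive) such time, $J$ is said to have Early State Exclusion (ESE) at time $t$ if $0<t<T_0$ and $(e^{-iJt}\mathbf{e}_0,\mathbf{e}_0)_{\mathbb{C}^{N+1}}=0$. *)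

(* Defs.v *)
From HB Require Import structures.
From mathcomp Require Import all_boot all_order all_algebra.
From mathcomp Require Export complex.
From mathcomp Require Import all_classical all_reals all_analysis.
Import Order.TTheory GRing.Theory Num.Theory.
Import numFieldNormedType.Exports.
Set Implicit Arguments. Unset Strict Implicit. Unset Printing Implicit Defensive.
Local Open Scope ring_scope.
Local Open Scope complex_scope.
Local Open Scope classical_set_scope.

(* Topology / norm on C = R[i] : the one induced by the complex modulus. *)
HB.instance Definition _ (R : rcfType) := PseudoPointedMetric.copy R[i] (R[i])^o.
HB.instance Definition _ (R : rcfType) := NormedModule.copy R[i] (R[i])^o.

Definition expmx (R : realType) (n : nat) (A : 'M[R[i]]_n) : 'M[R[i]]_n :=
  \matrix_(i, j) lim ((\sum_(k < m) (k`!%:R)^-1 * (A ^+ k) i j) @[m --> \oo]).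

Definition is_jacobi (R : realType) (N : nat) (J : 'M[R]_N.+1) : Prop :=
  (forall i j : 'I_N.+1, J i j = J j i) /\
  (forall i j : 'I_N.+1, (i.+1 < j)%N -> J i j = 0) /\
  (forall i j : 'I_N.+1, j = i.+1 :> nat -> 0 < J i j).

Definition cplx_mx (R : realType) (N : nat) (J : 'M[R]_N.+1) : 'M[R[i]]_N.+1 :=
  map_mx (fun x : R => x%:C) J.

Definition evol (R : realType) (N : nat) (J : 'M[R]_N.+1) (t : R) : 'M[R[i]]_N.+1 :=
  expmx ((- ('i * t%:C)) *: cplx_mx J).

Definition e0 (R : realType) (N : nat) : 'cV[R[i]]_N.+1 := delta_mx ord0 0.
Definition eN (R : realType) (N : nat) : 'cV[R[i]]_N.+1 := delta_mx ord_max 0.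

Definition cinner (R : realType) (N : nat) (u v : 'cV[R[i]]_N.+1) : R[i] :=
  \sum_(k < N.+1) u k 0 * (v k 0)^*.

Definition PST_at (R : realType) (N : nat) (J : 'M[R]_N.+1) (T : R) : Prop :=
  0 < T /\ exists phi : R,
    evol J T *m e0 R N = (cos phi +i* sin phi) *: eN R N.

Definition realizes_PST (R : realType) (N : nat) (J : 'M[R]_N.+1) : Prop :=
  exists T : R, PST_at J T.

Definition earliest_PST_time (R : realType) (N : nat) (J : 'M[R]_N.+1) (T0 : R) : Prop :=
  PST_at J T0 /\ (forall T : R, 0 < T < T0 -> ~ PST_at J T).

Definition ESE_at (R : realType) (N : nat) (J : 'M[R]_N.+1) (t : R) : Prop :=
  exists T0 : R, earliest_PST_time J T0 /\ 0 < t < T0 /\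
    cinner (evol J t *m e0 R N) (e0 R N) = 0.

(* Main.v *)
Require Import Defs.
From mathcomp Require Import all_boot all_order all_algebra.
From mathcomp Require Import all_classical all_reals all_analysis.
From mathcomp Require Import spectral sesquilinear ring lra.
Import Order.TTheory GRing.Theory Num.Theory.
Import numFieldNormedType.Exports.
Local Open Scope ring_scope.
Local Open Scope complex_scope.
Local Open Scope classical_set_scope.

Section Ser.
Variable R : realType.

Lemma negipow (x : R) (k : nat) :
  (- ('i * x%:C)) ^+ k =
  ((~~ odd k)%:R * (-1) ^+ k./2 * x ^+ k) +i* (- ((odd k)%:R * (-1) ^+ k./2 * x ^+ k)).
Proof.
elim: k => [|k IH]; first by rewrite /= !expr0 !mul1r; simpc.
rewrite exprS IH /=.
case Hk: (odd k) => /=; simpc; rewrite uphalf_half Hk ?add1n ?add0n exprS; congr (_ +i* _).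
- by rewrite ?exprS; ring.
- by rewrite ?exprS; ring.
Qed.

Lemma term_eq (x : R) (k : nat) :
  (k`!%:R)^-1 * (- ('i * x%:C)) ^+ k = (cos_coeff x k) +i* (- sin_coeff x k).
Proof.
rewrite negipow /cos_coeff /sin_coeff /=.
have -> : (k`!%:R : R[i])^-1 = ((k`!%:R)^-1 : R)%:C.
  rewrite fmorphV; congr (_^-1).
  by rewrite rmorph_nat.
simpc; rewrite exprnP; congr (_ +i* _); first by rewrite mulrC.
case Hk: (odd k); last by rewrite !mul0r mulr0.
have -> : k.-1./2 = k./2 by case: k Hk => //= k; rewrite uphalf_half => /negPf ->.
by rewrite mulrC.
Qed.

Lemma sqrt_small (u v E : R) : 0 < E -> `|u| < E / 2 -> `|v| < E / 2 ->
  Num.sqrt (u ^+ 2 + v ^+ 2) < E.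
Proof.
move=> E0 hu hv.
have s0 : 0 <= u ^+ 2 + v ^+ 2 by rewrite addr_ge0 // sqr_ge0.
have q0 := sqrtr_ge0 (u ^+ 2 + v ^+ 2).
have qs := sqr_sqrtr s0.
move: q0 qs; set q := Num.sqrt _ => q0 qs.
have nu := normr_ge0 u; have nv := normr_ge0 v.
have eu : u ^+ 2 = `|u| ^+ 2 by rewrite real_normK // num_real.
have ev : v ^+ 2 = `|v| ^+ 2 by rewrite real_normK // num_real.
have hs : u ^+ 2 + v ^+ 2 < E ^+ 2 by rewrite eu ev; nra.
rewrite -qs in hs; nra.
Qed.

Lemma cvg_complex (a b : nat -> R) (al be : R) :
  a n @[n --> \oo] --> al -> b n @[n --> \oo] --> be ->
  (a n +i* b n) @[n --> \oo] --> (al +i* be).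
Proof.
move=> Ha Hb. move/cvgrPdist_lt: Ha => Ha. move/cvgrPdist_lt: Hb => Hb. apply/cvgrPdist_lt => e e0.
case: e e0 => er ei e0.
have : (ei == 0) && (0 < er) by move: e0; rewrite ltcE.
case/andP => /eqP -> eRe.
have h2 : 0 < er / 2 by rewrite divr_gt0.
move: (Ha _ h2) (Hb _ h2) => Ha' Hb'.
near=> m.
have Am : `|al - a m| < er / 2 by near: m.
have Bm : `|be - b m| < er / 2 by near: m.
simpc => /=.
exact: sqrt_small.
Unshelve. all: by end_near.
Qed.


Lemma cvg_cos_series (x : R) : series (cos_coeff x) n @[n --> \oo] --> cos x.
Proof. by rewrite cos.unlock; exact: is_cvg_series_cos_coeff. Qed.

Lemma cvg_sin_series (x : R) : series (sin_coeff x) n @[n --> \oo] --> sin x.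
Proof. by rewrite sin.unlock; exact: is_cvg_series_sin_coeff. Qed.

Lemma sum_complex (m : nat) (f g : nat -> R) :
  \sum_(k < m) (f k +i* g k) = (\sum_(k < m) f k) +i* (\sum_(k < m) g k).
Proof.
elim: m => [|m IH]; first by rewrite !big_ord0.
by rewrite !big_ord_recr IH /=; simpc.
Qed.

Lemma cvg_expi (x : R) :
  (\sum_(k < m) (k`!%:R)^-1 * (- ('i * x%:C)) ^+ k) @[m --> \oo] --> (cos x +i* (- sin x)).
Proof.
have -> : (fun m => \sum_(k < m) (k`!%:R)^-1 * (- ('i * x%:C)) ^+ k) =
   (fun m => series (cos_coeff x) m +i* (- series (sin_coeff x) m)).
  apply/funext => m; under eq_bigr => k _ do rewrite term_eq; rewrite (sum_complex m (cos_coeff x) (fun k => - sin_coeff x k)).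
  by rewrite /series /= sumrN !big_mkord.
apply: (@cvg_complex (series (cos_coeff x)) (fun n => - series (sin_coeff x) n)); first exact: cvg_cos_series.
apply: cvgN; exact: cvg_sin_series.
Qed.
End Ser.

Lemma cvg_bigsum (R : realType) n (f : 'I_n -> nat -> R[i]) (l : 'I_n -> R[i]) :
  (forall k, f k m @[m --> \oo] --> l k) ->
  (\sum_(k < n) f k m) @[m --> \oo] --> \sum_(k < n) l k.
Proof.
elim: n f l => [|n IH] f l H.
  rewrite big_ord0.
  have -> : (fun m => \sum_(k < 0) f k m) = (fun _ => 0) by apply/funext => m; rewrite big_ord0.
  exact: cvg_cst.
rewrite big_ord_recr.
have -> : (fun m => \sum_(k < n.+1) f k m) =
  (fun m => \sum_(k < n) f (widen_ord (leqnSn n) k) m + f ord_max m).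
  by apply/funext => m; rewrite big_ord_recr.
apply: cvgD; last exact: H.
exact: IH.
Qed.

Section Spec.
Variable R : realType.
Variable J : 'M[R]_3.
Variable P : 'M[R[i]]_3.
Variable d : 'rV[R[i]]_3.
Hypothesis A_spec : cplx_mx J = invmx P *m diag_mx d *m P.
Hypothesis d_real : forall l, d 0 l = (complex.Re (d 0 l))%:C.
Hypothesis P_unit : P \in unitmx.
Hypothesis Pi_conj : forall a b, invmx P a b = (P b a)^*.

Lemma congr_PDP (D1 D2 : 'rV[R[i]]_3) : (forall l, D1 0 l = D2 0 l) ->
  invmx P *m diag_mx D1 *m P = invmx P *m diag_mx D2 *m P.
Proof. move=> H; have E : D1 = D2 by apply/rowP => l; exact: H.
rewrite E; reflexivity. Qed.

Lemma PDP_mul (D1 D2 : 'rV[R[i]]_3) :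
  (invmx P *m diag_mx D1 *m P) *m (invmx P *m diag_mx D2 *m P) =
  invmx P *m diag_mx (\row_l (D1 0 l * D2 0 l)) *m P.
Proof.
rewrite !mulmxA (mulmxK P_unit).
rewrite -[invmx P *m diag_mx D1 *m diag_mx D2]mulmxA mulmx_diag.
reflexivity.
Qed.

Lemma powA (s : R[i]) k :
  (s *: cplx_mx J) ^+ k = invmx P *m diag_mx (\row_l (s * d 0 l) ^+ k) *m P.
Proof.
elim: k => [|k IH].
  rewrite expr0.
  have -> : (\row_l (s * d 0 l) ^+ 0) = const_mx 1 by apply/rowP => l; rewrite !mxE.
  rewrite diag_const_mx mulmx1 mulVmx //; reflexivity.
rewrite exprS -mulmxE IH A_spec.
have -> : s *: (invmx P *m diag_mx d *m P) = invmx P *m diag_mx (\row_l (s * d 0 l)) *m P.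
  have E : s *: diag_mx d = diag_mx (\row_l (s * d 0 l)).
    by apply/matrixP => i j; rewrite !mxE mulrnAr.
  rewrite scalemxAl scalemxAr E; reflexivity.
rewrite !mulmxA (mulmxK P_unit) -[invmx P *m diag_mx _ *m diag_mx _]mulmxA mulmx_diag.
apply: congr_PDP => l; by rewrite !mxE exprS.
Qed.


Let re l := complex.Re (d 0 l).
Definition Ez (t : R) l : R[i] := cos (t * re l) +i* (- sin (t * re l)).

Lemma evolE t : evol J t = invmx P *m diag_mx (\row_l Ez t l) *m P.
Proof.
apply/matrixP => i j; rewrite /evol /expmx mxE.
set s := -('i * t%:C).
have hs l : s * d 0 l = -('i * (t * re l)%:C).
  by rewrite /s {1}(d_real l) mulNr -mulrA -rmorphM.
have -> : (fun m => \sum_(k < m) (k`!%:R)^-1 * ((s *: cplx_mx J) ^+ k) i j) =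
  (fun m => \sum_(l < 3) (invmx P i l * P l j) *
     \sum_(k < m) (k`!%:R)^-1 * (-('i * (t * re l)%:C)) ^+ k).
  apply/funext => m /=.
  under eq_bigr => k _ do rewrite powA mxE mulr_sumr.
  rewrite exchange_big /=; apply: eq_bigr => l _.
  rewrite mulr_sumr; apply: eq_bigr => k _.
  rewrite mul_mx_diag !mxE -hs; ring.
have -> : (invmx P *m diag_mx (\row_l Ez t l) *m P) i j =
   \sum_(l < 3) (invmx P i l * P l j) * Ez t l.
  rewrite mxE; apply: eq_bigr => l _; rewrite mul_mx_diag !mxE; ring.
apply: cvg_lim; first exact: norm_hausdorff.
apply: cvg_bigsum => l.
apply: cvgMr; exact: cvg_expi.
Qed.

Lemma cK (z : R[i]) : z^*^* = z.
Proof. by case: z => ? ? /=; rewrite opprK. Qed.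

Definition ctr (M : 'M[R[i]]_3) : 'M[R[i]]_3 := \matrix_(a, b) (M b a)^*.

Lemma P_conj a b : P a b = (invmx P b a)^*.
Proof. by rewrite Pi_conj cK. Qed.

Lemma Ez_conj t l : Ez t l * (Ez t l)^* = 1.
Proof.
rewrite /Ez; simpc; rewrite -!expr2 cos2Dsin2 [cos _ * _]mulrC subrr complexr0.
by apply/eqP; rewrite eq_complex /= !eqxx.
Qed.

Lemma ctr_evol t : ctr (evol J t) = invmx P *m diag_mx (\row_l (Ez t l)^*) *m P.
Proof.
rewrite evolE; apply/matrixP => a b; rewrite !mxE rmorph_sum /=.
apply: eq_bigr => l _; rewrite !mul_mx_diag !mxE !rmorphM /=.
rewrite -Pi_conj P_conj; ring.
Qed.

Lemma evol_unitary t : evol J t *m ctr (evol J t) = 1%:M.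
Proof.
rewrite ctr_evol evolE PDP_mul.
have -> : (\row_l ((\row_l Ez t l) 0 l * (\row_l (Ez t l)^*) 0 l)) = const_mx 1.
  apply/rowP => l; rewrite !mxE Ez_conj; reflexivity.
rewrite diag_const_mx mulmx1 mulVmx; [reflexivity | exact: P_unit].
Qed.

Lemma evol_comm t : evol J t *m cplx_mx J = cplx_mx J *m evol J t.
Proof.
rewrite evolE A_spec !PDP_mul; apply: congr_PDP => l; rewrite !mxE mulrC; reflexivity.
Qed.

End Spec.

Definition i0 : 'I_3 := ord0.
Definition i1 : 'I_3 := Ordinal (isT : (1 < 3)%N).
Definition i2 : 'I_3 := ord_max.

Lemma ord3P (a : 'I_3) : a = i0 \/ a = i1 \/ a = i2.
Proof.
case: a => [[|[|[|n]]] p].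
- by left; apply/val_inj.
- by right; left; apply/val_inj.
- by right; right; apply/val_inj.
- by [].
Qed.

Lemma sum3 (V : zmodType) (F : 'I_3 -> V) : \sum_(k < 3) F k = F i0 + F i1 + F i2.
Proof.
rewrite !big_ord_recr big_ord0 /= add0r.
congr (F _ + F _ + F _); by apply/val_inj.
Qed.

Lemma rev0 : rev_ord i0 = i2. Proof. by apply/val_inj. Qed.
Lemma rev1 : rev_ord i1 = i1. Proof. by apply/val_inj. Qed.
Lemma rev2 : rev_ord i2 = i0. Proof. by apply/val_inj. Qed.

Section Pow.
Variable R : realType.

Lemma pow_sym (B : 'M[R[i]]_3) : (forall a b, B a b = B b a) ->
  forall k a b, (B ^+ k) a b = (B ^+ k) b a.
Proof.
move=> HB; elim => [|k IH] a b.
  by rewrite expr0 !mxE eq_sym.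
rewrite [in LHS]exprS [in RHS]exprSr -!mulmxE !mxE; apply: eq_bigr => l _.
by rewrite IH HB mulrC.
Qed.

Lemma pow_persym (B : 'M[R[i]]_3) : (forall a b, B (rev_ord a) (rev_ord b) = B a b) ->
  forall k a b, (B ^+ k) (rev_ord a) (rev_ord b) = (B ^+ k) a b.
Proof.
move=> HB; elim => [|k IH] a b.
  by rewrite expr0 !mxE (inj_eq rev_ord_inj).
rewrite exprS -!mulmxE !mxE (reindex_inj rev_ord_inj) /=; apply: eq_bigr => l _.
by rewrite IH HB.
Qed.

Lemma expmx_sym (B : 'M[R[i]]_3) : (forall a b, B a b = B b a) ->
  forall a b, expmx B a b = expmx B b a.
Proof.
move=> HB a b; rewrite /expmx !mxE.
have -> : (fun m => \sum_(k < m) (k`!%:R)^-1 * (B ^+ k) a b) =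
          (fun m => \sum_(k < m) (k`!%:R)^-1 * (B ^+ k) b a).
  by apply/funext => m; apply: eq_bigr => k _; rewrite pow_sym.
reflexivity.
Qed.

Lemma expmx_persym (B : 'M[R[i]]_3) : (forall a b, B (rev_ord a) (rev_ord b) = B a b) ->
  forall a b, expmx B (rev_ord a) (rev_ord b) = expmx B a b.
Proof.
move=> HB a b; rewrite /expmx !mxE.
have -> : (fun m => \sum_(k < m) (k`!%:R)^-1 * (B ^+ k) (rev_ord a) (rev_ord b)) =
          (fun m => \sum_(k < m) (k`!%:R)^-1 * (B ^+ k) a b).
  by apply/funext => m; apply: eq_bigr => k _; rewrite pow_persym.
reflexivity.
Qed.

End Pow.

Local Close Scope classical_set_scope.
Lemma polar (R : realType) (a b : R) : a ^+ 2 + b ^+ 2 = 1 ->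
  exists phi : R, cos phi = a /\ sin phi = b.
Proof.
move=> h.
have ha : a \in `[(-1), 1] by rewrite in_itv /=; apply/andP; split; nra.
have hs : sin (acos a) = `|b|.
  rewrite sin_acos; last by move: ha; rewrite in_itv.
  have -> : 1 - a ^+ 2 = b ^+ 2 by lra.
  by rewrite sqrtr_sqr.
case: (lerP 0 b) => hb.
  by exists (acos a); rewrite acosK // hs ger0_norm.
by exists (- acos a); rewrite cosN sinN acosK // hs ltr0_norm // opprK.
Qed.
Local Open Scope classical_set_scope.

Section Main.
Variable R : realType.

Definition n2 (z : R[i]) : R := complex.Re z ^+ 2 + complex.Im z ^+ 2.

Lemma n2E (z : R[i]) : z * z^* = (n2 z)%:C.
Proof. by case: z => a b; rewrite /n2 /=; simpc; rewrite -!expr2 [b * a]mulrC addNr complexr0. Qed.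

Lemma n2_ge0 z : 0 <= n2 z.
Proof. by rewrite /n2 addr_ge0 // sqr_ge0. Qed.

Lemma n2_eq0 z : n2 z = 0 -> z = 0.
Proof.
case: z => a b; rewrite /n2 /= => H.
have ha : a = 0 by apply/eqP; rewrite -sqrf_eq0; apply/eqP; nra.
have hb : b = 0 by apply/eqP; rewrite -sqrf_eq0; apply/eqP; nra.
by rewrite ha hb.
Qed.

Lemma Cinj (x y : R) : x%:C = y%:C -> x = y.
Proof. by case. Qed.

Variable J : 'M[R]_3.
Hypothesis hJ : is_jacobi J.

Lemma Jsym a b : J a b = J b a. Proof. by case: hJ. Qed.
Lemma J02 : J i0 i2 = 0. Proof. by case: hJ => _ [H _]; apply: H. Qed.
Lemma J20 : J i2 i0 = 0. Proof. by rewrite Jsym J02. Qed.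
Lemma J01 : 0 < J i0 i1. Proof. by case: hJ => _ [_ H]; apply: H. Qed.
Lemma J12 : 0 < J i1 i2. Proof. by case: hJ => _ [_ H]; apply: H. Qed.

Let A := cplx_mx J.

Lemma spec_ex : exists (P : 'M[R[i]]_3) (d : 'rV[R[i]]_3),
  [/\ cplx_mx J = invmx P *m diag_mx d *m P,
      forall l, d 0 l = (complex.Re (d 0 l))%:C,
      P \in unitmx &
      forall a b, invmx P a b = (P b a)^*].
Proof.
have Aherm : A \is hermsymmx.
  apply: realsym_hermsym.
  - apply/is_hermitianmxP; rewrite expr0 scale1r; apply/matrixP => i j.
    by rewrite !mxE Jsym.
  - by apply/mxOverP => i j; rewrite mxE complex_real.
exists (spectralmx A), (spectral_diag A); split.
- exact/orthomx_spectralP/hermitian_normalmx.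
- have /mxOverP := hermitian_spectral_diag_real Aherm.
  by move=> H l; move: (H 0 l) => /RRe_real.
- exact: spectral_unit.
- move=> a b; rewrite invmx_unitary ?spectral_unitarymx // !mxE; reflexivity.
Qed.

Lemma evol_sym t a b : evol J t a b = evol J t b a.
Proof. by apply: expmx_sym => x y; rewrite !mxE Jsym. Qed.

Lemma evol_unit t a b :
  evol J t a i0 * (evol J t b i0)^* + evol J t a i1 * (evol J t b i1)^* +
  evol J t a i2 * (evol J t b i2)^* = (a == b)%:R.
Proof.
have [P [d [H1 H2 H3 H4]]] := spec_ex.
have := @evol_unitary R J P d H1 H2 H3 H4 t => /matrixP /(_ a b).
by rewrite !mxE sum3 !mxE.
Qed.

Lemma evol_commE t a b :
  \sum_(k < 3) evol J t a k * (J k b)%:C = \sum_(k < 3) (J a k)%:C * evol J t k b.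
Proof.
have [P [d [H1 H2 H3 H4]]] := spec_ex.
have := @evol_comm R J P d H1 H2 H3 t => /matrixP /(_ a b).
rewrite !mxE => H.
transitivity (\sum_(j < 3) evol J t a j * cplx_mx J j b).
  by apply: eq_bigr => k _; rewrite [cplx_mx _ _ _]mxE.
by rewrite H; apply: eq_bigr => k _; rewrite [cplx_mx _ _ _]mxE.
Qed.


Lemma col_e0 (M : 'M[R[i]]_3) k : (M *m e0 R 2) k 0 = M k i0.
Proof. by rewrite !mxE sum3 !mxE /= mulr1 !mulr0 !addr0. Qed.

Lemma n20 : n2 0 = 0.
Proof. by rewrite /n2 /= expr0n addr0. Qed.

Lemma eN_entry (c : R[i]) k : (c *: eN R 2) k 0 = c * (k == i2)%:R.
Proof. by rewrite !mxE /= andbT. Qed.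

Lemma n2C (x : R) : n2 x%:C = x ^+ 2.
Proof. by rewrite /n2 /= expr0n /= addr0. Qed.

Lemma n2_cis phi : n2 (cos phi +i* sin phi) = 1.
Proof. by rewrite /n2 /= cos2Dsin2. Qed.

Lemma pst_persym T : PST_at J T -> J i2 i2 = J i0 i0 /\ J i1 i2 = J i0 i1.
Proof.
case=> _ [phi H].
set U := evol J T in H *.
set c := cos phi +i* sin phi in H.
have col k : U k i0 = c * (k == i2)%:R.
  by rewrite -col_e0 H eN_entry.
have U00 : U i0 i0 = 0 by rewrite col mulr0.
have U10 : U i1 i0 = 0 by rewrite col mulr0.
have U20 : U i2 i0 = c by rewrite col mulr1.
have U02 : U i0 i2 = c by rewrite /U evol_sym.
have U01 : U i0 i1 = 0 by rewrite /U evol_sym.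
have U12 : U i1 i2 = U i2 i1 by rewrite /U evol_sym.
have cc : n2 c = 1 by exact: n2_cis.
have u22 := evol_unit T i2 i2.
rewrite -/U !n2E U20 cc eqxx -!rmorphD in u22.
move/Cinj: u22 => u22.
have h21 := n2_ge0 (U i2 i1); have h22 := n2_ge0 (U i2 i2).
have U21 : U i2 i1 = 0 by apply: n2_eq0; lra.
have U22 : U i2 i2 = 0 by apply: n2_eq0; lra.
have u11 := evol_unit T i1 i1.
rewrite -/U !n2E U10 U12 U21 eqxx n20 -!rmorphD in u11.
move/Cinj: u11; rewrite add0r addr0 => u11.
have cm1 := evol_commE T i0 i1.
rewrite -/U !sum3 U00 U01 U02 U21 J02 !mul0r !mulr0 !add0r !addr0 in cm1.
have cm2 := evol_commE T i0 i2.
rewrite -/U !sum3 U00 U01 U02 U12 U21 U22 J02 !mul0r !mulr0 !add0r !addr0 in cm2.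
have c0 : c != 0 by apply/eqP => c0; move: cc; rewrite c0 n20; lra.
split.
  apply: Cinj; apply: (mulfI c0); rewrite cm2 mulrC; reflexivity.
have E2 : (c * c^*) * ((J i2 i1)%:C * (J i2 i1)%:C^*) =
          ((J i0 i1)%:C * (J i0 i1)%:C^*) * (U i1 i1 * (U i1 i1)^*).
  transitivity ((c * (J i2 i1)%:C) * (c * (J i2 i1)%:C)^*).
    by rewrite rmorphM; ring.
  by rewrite cm1 rmorphM; ring.
rewrite !n2E n2C cc u11 n2C -!rmorphM in E2.
move/Cinj: E2; rewrite mul1r mulr1 (Jsym i2 i1) => E2.
have p1 := J01; have p2 := J12.
nra.
Qed.




Lemma J_persym : J i2 i2 = J i0 i0 -> J i1 i2 = J i0 i1 ->
  forall a b, J (rev_ord a) (rev_ord b) = J a b.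
Proof.
move=> h22 h12 a b.
have J21 : J i2 i1 = J i1 i0 by rewrite Jsym h12 Jsym.
have J10 : J i1 i0 = J i2 i1 by rewrite J21.
case: (ord3P a) => [->|[->|->]]; case: (ord3P b) => [->|[->|->]];
  rewrite ?rev0 ?rev1 ?rev2 //.
all: by rewrite ?(Jsym i2 i1) ?(Jsym i2 i0) ?(Jsym i1 i0) ?h12.
Qed.

Lemma evol_persym t : J i2 i2 = J i0 i0 -> J i1 i2 = J i0 i1 ->
  forall a b, evol J t (rev_ord a) (rev_ord b) = evol J t a b.
Proof.
move=> h1 h2; apply: expmx_persym => x y; rewrite !mxE J_persym //.
Qed.

Lemma cinnerE (M : 'M[R[i]]_3) : cinner (M *m e0 R 2) (e0 R 2) = M i0 i0.
Proof.
rewrite /cinner sum3 !col_e0 !mxE /=.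
set o1 := (X in _ * X + _ + _ = _).
set o2 := (X in _ + _ * X + _ = _).
set o3 := (X in _ + _ + _ * X = _).
have -> : o1 = 1 by rewrite /o1; apply/eqP; rewrite eq_complex /= oppr0 !eqxx.
have -> : o2 = 0 by rewrite /o2; apply/eqP; rewrite eq_complex /= oppr0 !eqxx.
have -> : o3 = 0 by rewrite /o3; apply/eqP; rewrite eq_complex /= oppr0 !eqxx.
by rewrite mulr1 !mulr0 !addr0.
Qed.

Lemma no_ese_at t : ~ ESE_at J t.
Proof.
case=> T0 [[hpst hmin] [/andP[t0 tT0] hin]].
have [h22 h12] := pst_persym T0 hpst.
have Up := evol_persym t h22 h12.
set U := evol J t in Up hin.
rewrite cinnerE in hin.
have U22 : U i2 i2 = 0 by rewrite -rev0 Up.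
have U21 : U i2 i1 = U i0 i1 by rewrite -rev0 -{1}rev1 Up.
have u02 := evol_unit t i0 i2.
have U22c : Num.conj (U i2 i2) = 0 by rewrite U22 conjC0.
rewrite -/U hin mul0r add0r U21 U22c mulr0 addr0 n2E in u02.
have U01 : U i0 i1 = 0.
  by apply: n2_eq0; apply: Cinj; rewrite u02; reflexivity.
have u00 := evol_unit t i0 i0.
rewrite -/U hin U01 !n2E n20 eqxx -!rmorphD in u00.
move/Cinj: u00; rewrite !add0r => u00.
have [phi [hc hs]] := @polar R _ _ u00.
apply: (hmin t); first by rewrite t0 tT0.
split => //; exists phi.
apply/matrixP => k j; rewrite (ord1 j) col_e0 eN_entry.
case: (ord3P k) => [->|[->|->]].
- rewrite -/U hin /= mulr0. reflexivity.
- rewrite -/U evol_sym -/U U01 /= mulr0. reflexivity.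
- rewrite -/U evol_sym -/U /= mulr1 hc hs.
  by case: (U i0 i2).
Qed.

End Main.

Local Close Scope classical_set_scope.
Local Close Scope complex_scope.

Theorem mainTheorem1 (R : realType) (J : 'M[R]_3) :
  is_jacobi J -> realizes_PST J -> forall t : R, ~ ESE_at J t.
Proof. move=> hJ _ t; exact: (@no_ese_at R J hJ t). Qed.
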